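(* Consider the stochastic rolling-window dispatch problem $P_t$ for window $\mathscr{H}_t=\{t,\dots,t+W-1\}$ described in the context, and let $(\phi^*,\underline{\delta}^*,\bar{\delta}^*,\dots)$ be an optimal dual solution (satisfying the KKT conditions together with an optimal primal solution). Then for every ESR $i$, \[\phi^*_{it}=\Delta \delta_{it}^*+\sum_{t'=t+1}^{t+W-1}\sum_{k=1}^K\Delta \delta_{it'k}^*,\] where $\Delta \delta_{it}^*:=\underline{\delta}_{it}^*-\bar{\delta}_{it}^*$ and $\Delta \delta_{it'k}^*:=\underline{\delta}_{it'k}^*-\bar{\delta}_{it'k}^*$.
   Context: Single-bus market with $N$ energy storage resources (ESRs) indexed by $i$. ESR $i$ has charging/discharging efficiencies $\xi_i^{C},\xi_i^{D}\in(0,1]$, state-of-charge (SOC) limits $\underline{E}_i\le\bar{E}_i$, charging/discharging power limits $(\underline{g}_i^{C},\bar{g}_i^{C})$, $(\underline{g}_i^{D},\bar{g}_i^{D})$, ramp limits $\underline{r}_i^{C},\bar{r}_i^{C},\underline{r}_i^{D},\bar{r}_i^{D}$, and bid-in charging benefit and discharging cost functions $f^{C}_{it},f^{D}_{it}$. At interval $t$ the operator solves, over the window $\mathscr{H}_t=\{t,\dots,t+W-1\}$, given realized inelastic demand $d_t$, $K$ demand forecast scenarios $\hat d_{t'k}$ ($t'\in\mathscr{H}_t\setminus\{t\}$) with probabilities $\epsilon_k$, and the previously realized values $g^{C*}_{i(t-1)},g^{D*}_{i(t-1)},E^*_{i(t-1)}$, the problem $P_t$: minimize $\sum_i\big(f^{D}_{it}(g^{D}_{it})-f^{C}_{it}(g^{C}_{it})\big)+\sum_k\epsilon_k\sum_{t'\in\mathscr{H}_t\setminus\{t\}}\sum_i\big(f^{D}_{it'}(g^{D}_{it'k})-f^{C}_{it'}(g^{C}_{it'k})\big)$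 subject to, for all $i$, $k$, $t'\in\mathscr{H}_t\setminus\{t\}$ (with the convention that in scenario $k$ the interval-$t$ variables are the binding variables $g_{it},E_{it}$): power balance $\sum_i(g^{D}_{it}-g^{C}_{it})=d_t$ (multiplier $\lambda_t$) and $\sum_i(g^{D}_{it'k}-g^{C}_{it'k})=\hat d_{t'k}$; SOC transition $E_{it}-E^*_{i(t-1)}=\xi_i^{C}g^{C}_{it}-g^{D}_{it}/\xi_i^{D}$ (multiplier $\phi_{it}$) and $E_{it'k}-E_{i(t'-1)k}=\xi_i^{C}g^{C}_{it'k}-g^{D}_{it'k}/\xi_i^{D}$ (multiplier $\phi_{it'k}$); SOC limits $\underline{E}_i\le E_{it}\le\bar E_i$ (multipliers $\underline{\delta}_{it},\bar\delta_{it}$) and $\underline{E}_i\le E_{it'k}\le\bar E_i$ (multipliers $\underline{\delta}_{it'k},\bar\delta_{it'k}$); ramping $-\underline{r}_i^{C}\le g^{C}_{it}-g^{C*}_{i(t-1)}\le\bar r_i^{C}$ (multipliers $\underline{\mu}^{C}_{it},\bar\mu^{C}_{it}$), $-\underline{r}_i^{C}\le g^{C}_{it'k}-g^{C}_{i(t'-1)k}\le\bar r_i^{C}$ (multipliers $\underline{\mu}^{C}_{it'k},\bar\mu^{C}_{it'k}$), and the same with $D$ in place of $C$; power limits $\underline g_i^{C}\le g^{C}\le\bar g_i^{C}$, $\underline g_i^{D}\le g^{D}\le\bar g_i^{D}$ for all binding and scenario variables (multipliers $\underline\rho,\bar\rho$). Multipliers of inequality constraints are nonnegative and enter the Lagrangian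 as $\bar\mu(x-\text{upper})+\underline\mu(\text{lower}-x)$; an equality constraint written as $\text{LHS}=\text{RHS}$ enters as (multiplier)$\times$(LHS$-$RHS), except power balance, which enters as $\lambda_t\big(d_t-\sum_i(g^D_{it}-g^C_{it})\big)$ (and analogously for scenarios). *)

(* Defs.v *)
From HB Require Import structures.
From mathcomp Require Import all_boot all_order all_algebra.
From mathcomp Require Import all_classical all_reals all_analysis.
Set Implicit Arguments. Unset Strict Implicit. Unset Printing Implicit Defensive.
Import Order.TTheory GRing.Theory Num.Theory.
Import numFieldNormedType.Exports.
Local Open Scope ring_scope.

(* Market data of the problem P_t (N ESRs, K scenarios).
   Scenario quantities are indexed by the offset j = t' - t, 1 <= j <= W-1. *)
Record market (R : realType) (N K : nat) := Market {
  xiC : 'I_N -> R;  xiD : 'I_N -> R;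
  Elo : 'I_N -> R;  Ehi : 'I_N -> R;
  gClo : 'I_N -> R; gChi : 'I_N -> R;
  gDlo : 'I_N -> R; gDhi : 'I_N -> R;
  rClo : 'I_N -> R; rChi : 'I_N -> R;
  rDlo : 'I_N -> R; rDhi : 'I_N -> R;
  fC : 'I_N -> nat -> R -> R;                 (* f^C_{i t'} (absolute time t') *)
  fD : 'I_N -> nat -> R -> R;
  dem : R;
  dhat : nat -> 'I_K -> R;
  eps : 'I_K -> R;
  gCstar : 'I_N -> R; gDstar : 'I_N -> R; Estar : 'I_N -> R (* realized t-1 *)
}.

Definition wf_market (R : realType) (N K : nat) (m : market R N K) : Prop :=
  (forall i, 0 < xiC m i <= 1 /\ 0 < xiD m i <= 1 /\ Elo m i <= Ehi m i) /\
  (forall k, 0 <= eps m k) /\ \sum_(k < K) eps m k = 1.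

(* A "slot": None = the binding interval t; Some (j,k) = interval t+j in scenario k. *)
Definition slot (K : nat) := option (nat * 'I_K).

Definition valid (K W : nat) (s : slot K) : bool :=
  match s with None => true | Some (j, _) => (1 <= j < W)%N end.

Definition ssum (R : realType) (K W : nat) (F : slot K -> R) : R :=
  F None + \sum_(k < K) \sum_(1 <= j < W) F (Some (j, k)).

Definition tm (K : nat) (t : nat) (s : slot K) : nat :=
  match s with None => t | Some (j, _) => (t + j)%N end.

Definition weight (R : realType) (N K : nat) (m : market R N K) (s : slot K) : R :=
  match s with None => 1 | Some (_, k) => eps m k end.

Definition demand (R : realType) (N K : nat) (m : market R N K) (s : slot K) : R :=
  match s with None => dem m | Some (j, k) => dhat m j k end.

Record prim (R : realType) (N K : nat) := Prim {
  pgC : 'I_N -> slot K -> R; pgD : 'I_N -> slot K -> R; pE : 'I_N -> slot K -> R }.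

Record dual (R : realType) (N K : nat) := Dual {
  lam : slot K -> R;
  phi : 'I_N -> slot K -> R;
  dlo : 'I_N -> slot K -> R; dhi : 'I_N -> slot K -> R;
  muClo : 'I_N -> slot K -> R; muChi : 'I_N -> slot K -> R;
  muDlo : 'I_N -> slot K -> R; muDhi : 'I_N -> slot K -> R;
  rhoClo : 'I_N -> slot K -> R; rhoChi : 'I_N -> slot K -> R;
  rhoDlo : 'I_N -> slot K -> R; rhoDhi : 'I_N -> slot K -> R
}.

Definition prevv (R : realType) (N K : nat) (x : 'I_N -> slot K -> R)
  (star : 'I_N -> R) (i : 'I_N) (s : slot K) : R :=
  match s with
  | None => star i
  | Some (j, k) => if j == 1%N then x i None else x i (Some (j.-1, k))
  end.

Section Problem.
Variables (R : realType) (N K : nat) (m : market R N K) (W t : nat).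

Definition objective (p : prim R N K) : R :=
  ssum W (fun s => weight m s *
    \sum_(i < N) (fD m i (tm t s) (pgD p i s) - fC m i (tm t s) (pgC p i s))).

Definition soc_res (p : prim R N K) i s : R :=
  pE p i s - prevv (pE p) (Estar m) i s - (xiC m i * pgC p i s - pgD p i s / xiD m i).
Definition rampC (p : prim R N K) i s : R := pgC p i s - prevv (pgC p) (gCstar m) i s.
Definition rampD (p : prim R N K) i s : R := pgD p i s - prevv (pgD p) (gDstar m) i s.

Definition feasible (p : prim R N K) : Prop :=
  forall s : slot K, valid W s ->
    \sum_(i < N) (pgD p i s - pgC p i s) = demand m s /\
    forall i : 'I_N,
      soc_res p i s = 0 /\
      Elo m i <= pE p i s <= Ehi m i /\
      - rClo m i <= rampC p i s <= rChi m i /\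
      - rDlo m i <= rampD p i s <= rDhi m i /\
      gClo m i <= pgC p i s <= gChi m i /\
      gDlo m i <= pgD p i s <= gDhi m i.

Definition optimal (p : prim R N K) : Prop :=
  feasible p /\ forall q, feasible q -> objective p <= objective q.

Definition lagrangian (p : prim R N K) (d : dual R N K) : R :=
  objective p +
  ssum W (fun s => lam d s * (demand m s - \sum_(i < N) (pgD p i s - pgC p i s)) +
    \sum_(i < N) (
        phi d i s * soc_res p i s
      + dhi d i s * (pE p i s - Ehi m i) + dlo d i s * (Elo m i - pE p i s)
      + muChi d i s * (rampC p i s - rChi m i) + muClo d i s * (- rClo m i - rampC p i s)
      + muDhi d i s * (rampD p i s - rDhi m i) + muDlo d i s * (- rDlo m i - rampD p i s)
      + rhoChi d i s * (pgC p i s - gChi m i) + rhoClo d i s * (gClo m i - pgC p i s)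
      + rhoDhi d i s * (pgD p i s - gDhi m i) + rhoDlo d i s * (gDlo m i - pgD p i s))).

Definition dual_feasible (d : dual R N K) : Prop :=
  forall i s, valid W s ->
    0 <= dlo d i s /\ 0 <= dhi d i s /\ 0 <= muClo d i s /\ 0 <= muChi d i s /\
    0 <= muDlo d i s /\ 0 <= muDhi d i s /\ 0 <= rhoClo d i s /\ 0 <= rhoChi d i s /\
    0 <= rhoDlo d i s /\ 0 <= rhoDhi d i s.

Definition compl_slack (p : prim R N K) (d : dual R N K) : Prop :=
  forall i s, valid W s ->
    dhi d i s * (pE p i s - Ehi m i) = 0 /\ dlo d i s * (Elo m i - pE p i s) = 0 /\
    muChi d i s * (rampC p i s - rChi m i) = 0 /\ muClo d i s * (- rClo m i - rampC p i s) = 0 /\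
    muDhi d i s * (rampD p i s - rDhi m i) = 0 /\ muDlo d i s * (- rDlo m i - rampD p i s) = 0 /\
    rhoChi d i s * (pgC p i s - gChi m i) = 0 /\ rhoClo d i s * (gClo m i - pgC p i s) = 0 /\
    rhoDhi d i s * (pgD p i s - gDhi m i) = 0 /\ rhoDlo d i s * (gDlo m i - pgD p i s) = 0.

Definition upd (x : 'I_N -> slot K -> R) (i : 'I_N) (s : slot K) (y : R) :=
  fun i' s' => if (i' == i) && (s' == s) then y else x i' s'.

Definition updC p i s y := Prim (upd (pgC p) i s y) (pgD p) (pE p).
Definition updD p i s y := Prim (pgC p) (upd (pgD p) i s y) (pE p).
Definition updE p i s y := Prim (pgC p) (pgD p) (upd (pE p) i s y).

Definition stationary (p : prim R N K) (d : dual R N K) : Prop :=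
  forall i s, valid W s ->
    is_derive (pgC p i s) (1 : R) (fun y : R => lagrangian (updC p i s y) d) 0 /\
    is_derive (pgD p i s) (1 : R) (fun y : R => lagrangian (updD p i s y) d) 0 /\
    is_derive (pE p i s) (1 : R) (fun y : R => lagrangian (updE p i s y) d) 0.

Definition KKT (p : prim R N K) (d : dual R N K) : Prop :=
  feasible p /\ dual_feasible d /\ compl_slack p d /\ stationary p d.

End Problem.

(* Main.v *)
Require Import Defs.
From HB Require Import structures.
From mathcomp Require Import all_boot all_order all_algebra.
From mathcomp Require Import all_classical all_reals all_analysis.
From mathcomp Require Import ring.
Import Order.TTheory GRing.Theory Num.Theory.
Import numFieldNormedType.Exports.
Local Open Scope ring_scope.

Lemma der0 (R : realType) (L : R -> R) (y0 a c : R) :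
  (forall y, L y = a + (y - y0) * c) -> is_derive y0 (1:R) L 0 -> c = 0.
Proof.
move=> HL HD.
have HL' : L = (fun y => a + (y - y0) * c) by apply/funext.
have H2 : is_derive y0 (1:R) (fun y => a + (y - y0) * c) c.
  apply: is_derive_eq.
  by rewrite subrr scale0r add0r subr0 scaler1 add0r mul1r.
rewrite HL' in HD.
have e1 := @derive_val _ _ _ _ _ _ _ H2.
have e2 := @derive_val _ _ _ _ _ _ _ HD.
by rewrite -e1 -e2.
Qed.

Lemma shift (R : realType) (W : nat) (f g : nat -> R) (a : R) :
  \sum_(1 <= j < W) f j * (if j == 1%N then a else g j.-1) =
  (if (1 < W)%N then f 1%N else 0) * a +
  \sum_(1 <= j < W) (if (j.+1 < W)%N then f j.+1 else 0) * g j.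
Proof.
case: W => [|n]; first by rewrite !big_geq // mul0r addr0.
case: n => [|n]; first by rewrite !big_geq // mul0r addr0.
rewrite big_nat_recl // [in RHS]big_nat_recr //= ltnn mul0r addr0 /=.
congr (_ + _); apply: eq_big_nat => j /andP [j1 jn].
have -> : (j.+1 == 1%N) = false by case: j j1 {jn}.
by rewrite ltnS jn.
Qed.

Section L.
Variables (R : realType) (N K W : nat).

Lemma ssum_ext (F G : slot K -> R) :
  (forall s, valid W s -> F s = G s) -> ssum W F = ssum W G.
Proof.
move=> H; rewrite /ssum H //; congr (_ + _); apply: eq_bigr => k _.
apply: eq_big_nat => j jW; exact: H.
Qed.

Lemma ssumD (F G : slot K -> R) :
  ssum W (fun s => F s + G s) = ssum W F + ssum W G.
Proof.
rewrite /ssum.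
have -> : \sum_(k < K) \sum_(1 <= j < W) (F (Some (j, k)) + G (Some (j, k))) =
  \sum_(k < K) \sum_(1 <= j < W) F (Some (j, k)) + \sum_(k < K) \sum_(1 <= j < W) G (Some (j, k)).
  by rewrite -big_split; apply: eq_bigr => k _; rewrite big_split.
ring.
Qed.

Lemma ssum_sum (h : 'I_N -> slot K -> R) :
  ssum W (fun s => \sum_(i < N) h i s) = \sum_(i < N) ssum W (h i).
Proof.
rewrite /ssum big_split /=; congr (_ + _).
rewrite [RHS]exchange_big /=; apply: eq_bigr => k _.
by rewrite [RHS]exchange_big.
Qed.

Definition grad (ph q : slot K -> R) (s : slot K) : R :=
  match s with
  | None => ph None + q None - \sum_(k < K) (if (1 < W)%N then ph (Some (1%N, k)) else 0)
  | Some (j, k) => ph s + q s - (if (j.+1 < W)%N then ph (Some (j.+1, k)) else 0)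
  end.

Lemma gradE (Dx : 'I_N -> slot K -> R) (i : 'I_N) (ph q : slot K -> R) :
  ssum W (fun s => ph s * (Dx i s - prevv Dx (fun _ => 0) i s) + q s * Dx i s)
  = ssum W (fun s => Dx i s * grad ph q s).
Proof.
rewrite /ssum /= subr0.
have Hk : forall k : 'I_K,
  \sum_(1 <= j < W) (ph (Some (j, k)) * (Dx i (Some (j, k)) -
       (if j == 1%N then Dx i None else Dx i (Some (j.-1, k)))) +
     q (Some (j, k)) * Dx i (Some (j, k)))
  = \sum_(1 <= j < W) Dx i (Some (j, k)) * grad ph q (Some (j, k))
    - (if (1 < W)%N then ph (Some (1%N, k)) else 0) * Dx i None.
  move=> k.
  have E1 : \sum_(1 <= j < W) (ph (Some (j, k)) * (Dx i (Some (j, k)) -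
       (if j == 1%N then Dx i None else Dx i (Some (j.-1, k)))) +
     q (Some (j, k)) * Dx i (Some (j, k))) =
     \sum_(1 <= j < W) Dx i (Some (j, k)) * grad ph q (Some (j, k)) +
     (\sum_(1 <= j < W) (if (j.+1 < W)%N then ph (Some (j.+1, k)) else 0) * Dx i (Some (j, k))
      - \sum_(1 <= j < W) ph (Some (j, k)) *
          (if j == 1%N then Dx i None else Dx i (Some (j.-1, k)))).
    rewrite -sumrB -big_split /=; apply: eq_bigr => j _ /=; ring.
  rewrite E1 (@shift R W (fun j => ph (Some (j, k))) (fun j => Dx i (Some (j, k)))).
  ring.
have -> : \sum_(k < K) \sum_(1 <= j < W) (ph (Some (j, k)) * (Dx i (Some (j, k)) -
       prevv Dx (fun _ => 0) i (Some (j, k))) + q (Some (j, k)) * Dx i (Some (j, k)))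
  = \sum_(k < K) (\sum_(1 <= j < W) Dx i (Some (j, k)) * grad ph q (Some (j, k))
    - (if (1 < W)%N then ph (Some (1%N, k)) else 0) * Dx i None).
  by apply: eq_bigr => k _; rewrite -Hk.
rewrite sumrB -mulr_suml /=; ring.
Qed.


Lemma lag_diff (m : market R N K) t (p : prim R N K) (d : dual R N K)
  (E' : 'I_N -> slot K -> R) :
  lagrangian m W t (Prim (pgC p) (pgD p) E') d = lagrangian m W t p d +
   \sum_(i < N) ssum W (fun s => (E' i s - pE p i s) *
      grad (phi d i) (fun s => dhi d i s - dlo d i s) s).
Proof.
set Dx := fun i s => E' i s - pE p i s.
rewrite -(eq_bigr _ (fun i _ => gradE Dx i (phi d i) (fun s => dhi d i s - dlo d i s))).
rewrite -ssum_sum /lagrangian -[in RHS]addrA; congr (_ + _).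
rewrite -ssumD; apply: ssum_ext => s _.
rewrite -addrA -big_split /=; congr (_ + _); apply: eq_bigr => i _.
rewrite /soc_res /Dx /=.
case: s => [[j k]|] /=; [case: eqP => _ |]; ring.
Qed.


Lemma ssum0 : ssum W (fun _ : slot K => (0 : R)) = 0.
Proof. by rewrite /ssum big1 ?addr0 // => k _; rewrite big1. Qed.

Lemma someE (j j0 : nat) (k k0 : 'I_K) :
  (Some (j, k) == Some (j0, k0) :> slot K) = (j == j0) && (k == k0).
Proof. by []. Qed.

Lemma ind_sum (G : 'I_N -> slot K -> R) (i : 'I_N) (s : slot K) (a : R) :
  valid W s ->
  \sum_(i' < N) ssum W (fun s' => (if (i' == i) && (s' == s) then a else 0) * G i' s')
  = a * G i s.
Proof.
move=> vs; rewrite (bigD1 i) //= big1 ?addr0; last first.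
  move=> i' /negbTE ne; rewrite -[RHS]ssum0; apply: ssum_ext => s' _.
  by rewrite ne andFb mul0r.
rewrite eqxx /=; case: s vs => [[j0 k0]|] /= vs.
  rewrite /ssum /= mul0r add0r (bigD1 k0) //= [X in _ + X]big1 ?addr0; last first.
    move=> k /negbTE ne; apply: big1 => j _.
    by rewrite someE ne andbF mul0r.
  rewrite (bigD1_seq j0) //= ?mem_index_iota ?iota_uniq //.
  rewrite someE !eqxx /= big1 ?addr0 // => j /negbTE ne.
  by rewrite someE ne mul0r.
rewrite /ssum eqxx big1 ?addr0 // => k _; apply: big1 => j _; by rewrite mul0r.
Qed.

End L.
Arguments grad {R K} W ph q s.
Arguments ind_sum {R N K W} G i s a.
Arguments ssum_ext {R K W} F G.

Theorem lemma1 (R : realType) (N K W t : nat) (m : market R N K)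
  (p : prim R N K) (d : dual R N K) :
  wf_market m -> optimal m W t p -> KKT m W t p d ->
  forall i : 'I_N,
    phi d i None =
      (dlo d i None - dhi d i None)
      + \sum_(1 <= j < W) \sum_(k < K) (dlo d i (Some (j, k)) - dhi d i (Some (j, k))).
Proof.
move=> _ _ [_ [_ [_ Hst]]] i.
have G0 : forall s, valid W s ->
    grad W (phi d i) (fun s => dhi d i s - dlo d i s) s = 0.
  move=> s vs; have [_ [_ HE]] := Hst i s vs.
  apply: (der0 _ _ _ (lagrangian m W t p d) _ _ HE) => y.
  rewrite /updE lag_diff; congr (_ + _).
  rewrite -(ind_sum (fun i' s' => grad W (phi d i') (fun s => dhi d i' s - dlo d i' s) s') i s (y - pE p i s) vs).
  apply: eq_bigr => i' _; apply: ssum_ext => s' _.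
  rewrite /upd; case: ifP => [/andP [/eqP -> /eqP ->] | _] //.
  by rewrite subrr.
have tele : forall k r n, (W - n)%N = r -> (1 <= n)%N ->
    (if (n < W)%N then phi d i (Some (n, k)) else 0) =
    \sum_(n <= j < W) (dlo d i (Some (j, k)) - dhi d i (Some (j, k))).
  move=> k; elim => [|r IH] n Hr Hn.
    have HW : (W <= n)%N by rewrite -subn_eq0 Hr.
    by rewrite leqNgt in HW; rewrite (negbTE HW) big_geq // leqNgt.
  have HW : (n < W)%N by rewrite -subn_gt0 Hr.
  rewrite HW big_ltn // -IH; last by [].
    have := G0 (Some (n, k)); rewrite /= Hn HW => /(_ isT) /eqP.
    by rewrite subr_eq0 => /eqP <-; ring.
  by rewrite subnS Hr.
have := G0 None => /(_ isT) /= /eqP; rewrite subr_eq0 => /eqP.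
move=> H.
have -> : phi d i None = dlo d i None - dhi d i None +
    \sum_(k < K) (if (1 < W)%N then phi d i (Some (1%N, k)) else 0).
  by rewrite -H; ring.
congr (_ + _); rewrite exchange_big /=; apply: eq_bigr => k _.
exact: (tele k (W - 1)%N 1%N).
Qed.
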